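(* Let $(\Omega,\Sigma,\mu)$ be any measure space and $1<p<\infty$. Let $(f_n)$ be a pairwise disjoint sequence in the unit ball of $L^{p,\infty}(\Omega,\Sigma,\mu)$ (with respect to the quasi-norm below), and let $(M_n)$ be a real sequence with $1<M_n\le 2^{-1/p}M_{n+1}$ for all $n\in\mathbb N$. Define $g_1=(f_1)_{M_1}$ and $g_{n+1}=(f_{n+1})_{M_{n+1}}-(f_{n+1})_{M_n}$ for $n\ge1$. Then $\sup_k\big\|\sum_{n=1}^k g_n\big\|\le 4$.
   Context: $L^{p,\infty}(\Omega,\Sigma,\mu)$ is the space of (equivalence classes of) measurable $f$ with $\|f\|=\sup_{c>0}c\,(\mu\{|f|>c\})^{1/p}<\infty$; $\|\cdot\|$ denotes this quasi-norm. For a real-valued function $f$ and $1<M<\infty$, $(f)_M=f\chi_{\{M^{-1}<|f|<M\}}$. Functions $f,g$ are disjoint if $|f|\wedge|g|=0$. *)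

(* Defs.v *)
From HB Require Import structures.
From mathcomp Require Import all_boot all_order all_algebra.
From mathcomp Require Import all_classical all_reals all_analysis.
Set Implicit Arguments. Unset Strict Implicit. Unset Printing Implicit Defensive.
Import Order.TTheory GRing.Theory Num.Theory.
Local Open Scope classical_set_scope.
Local Open Scope ring_scope.

Definition weakLnorm {d : measure_display} {T : measurableType d} {R : realType}
  (mu : {measure set T -> \bar R}) (p : R) (f : T -> R) : \bar R :=
  ereal_sup [set (c%:E * poweR (mu [set x | (c < `|f x|)%R]) p^-1)%E
            | c in [set c : R | 0 < c]].

Definition trunc {T : Type} {R : realType} (f : T -> R) (M : R) : T -> R :=
  fun x => if (M^-1 < `|f x| < M) then f x else 0.

(* the functions g_n of the statement, 0-indexed: gseq 0 = (f 0)_{M 0},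
   gseq (n+1) = (f (n+1))_{M (n+1)} - (f (n+1))_{M n} *)
Definition gseq {T : Type} {R : realType} (f : nat -> T -> R) (M : nat -> R)
  (n : nat) : T -> R :=
  match n with
  | 0 => trunc (f 0%N) (M 0%N)
  | m.+1 => fun x => trunc (f m.+1) (M m.+1) x - trunc (f m.+1) (M m) x
  end.

(* Main.v *)
Require Import Defs.
From HB Require Import structures.
From mathcomp Require Import all_boot all_order all_algebra.
From mathcomp Require Import all_classical all_reals all_analysis.
From mathcomp Require Import lra.
Import Order.TTheory GRing.Theory Num.Theory.
Local Open Scope classical_set_scope.
Local Open Scope ring_scope.

Definition firstb (b : nat -> bool) (n : nat) : bool :=
  b n && (if n is j.+1 then ~~ b j else true).
Definition shiftf {R : Type} (z : R) (G : nat -> R) (n : nat) : R :=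
  if n is j.+1 then G j else z.

Section RealLemmas.
Variable R : realFieldType.

Lemma up_sum (a : nat -> R) (th : R) : 0 <= th -> (forall n, 0 <= a n) ->
  (forall n, 2 * a n <= a n.+1) ->
  forall k, \sum_(n < k) (if a n < th then a n else 0) <= 2 * th.
Proof.
move=> th0 a0 a2.
have H : forall k, \sum_(n < k.+1) (if a n < th then a n else 0) <=
   2 * (if a k < th then a k else th).
  elim=> [|k IH].
    rewrite big_ord_recr big_ord0 /= add0r.
    case: ifP => _; last by rewrite mulr_ge0.
    by have := a0 0%N; lra.
  rewrite big_ord_recr /=.
  case: ifP => hk1.
    have hk : a k < th.
      by have := a2 k; have := a0 k; lra.
    rewrite hk in IH.
    by have := a2 k; lra.
  rewrite addr0; apply: (le_trans IH).
  by case: ifP => hk; lra.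
case=> [|k]; first by rewrite big_ord0; lra.
apply: (le_trans (H k)); case: ifP => hk; lra.
Qed.

Lemma down_sum_aux (a : nat -> R) (th : R) : 0 <= th -> (forall n, 0 <= a n) ->
  (forall n, 2 * a n.+1 <= a n) ->
  forall k, \sum_(n < k) (if a n < th then a n else 0)
      + 2 * (if a k < th then a k else th) <= 2 * th.
Proof.
move=> th0 a0 a2; elim=> [|k IH].
  rewrite big_ord0 add0r; case: ifP => h; lra.
rewrite big_ord_recr /=.
move: IH; case: ifP => hk IH.
  have := a2 k; have := a0 k.+1.
  by case: ifP => h; lra.
have := a0 k.+1.
case: ifP => h; lra.
Qed.

Lemma down_sum (a : nat -> R) (th : R) : 0 <= th -> (forall n, 0 <= a n) ->
  (forall n, 2 * a n.+1 <= a n) ->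
  forall k, \sum_(n < k) (if a n < th then a n else 0) <= 2 * th.
Proof.
move=> th0 a0 a2 k; have := down_sum_aux a th th0 a0 a2 k.
have := a0 k; case: ifP => h; lra.
Qed.

Lemma tele_sum (b : nat -> bool) : (forall n, b n -> b n.+1) ->
  forall k, \sum_(n < k) ((firstb b n)%:R : R)
     <= 1.
Proof.
move=> bm.
have H : forall k, \sum_(n < k) ((firstb b n)%:R : R)
     = (if k is j.+1 then b j else false)%:R.
  elim=> [|k IH]; first by rewrite big_ord0.
  rewrite big_ord_recr /= IH /firstb.
  case: k IH => [|j] IH /=; first by rewrite add0r andbT.
  case hj: (b j) => /=; last by rewrite add0r andbT.
  by rewrite (bm _ hj) /= addr0.
move=> k; rewrite H; case: k => [|j]; first by rewrite ler01.
by case: (b j); rewrite ?ler01.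
Qed.

Lemma shift_sum (G : nat -> R) k :
  \sum_(n < k.+1) shiftf 0 G n = \sum_(j < k) G j.
Proof.
elim: k => [|k IH]; first by rewrite big_ord_recr !big_ord0 /= addr0.
by rewrite big_ord_recr /= IH [RHS]big_ord_recr.
Qed.


Lemma shift_sumz (z : R) (G : nat -> R) k :
  \sum_(n < k.+1) shiftf z G n = z + \sum_(j < k) G j.
Proof.
elim: k => [|k IH]; first by rewrite big_ord_recr !big_ord0 /= add0r addr0.
by rewrite big_ord_recr /= IH [in RHS]big_ord_recr addrA.
Qed.

Lemma P_mono (P : nat -> R) : (forall n, 1 < P n) -> (forall n, 2 * P n <= P n.+1) ->
  forall n m, (n <= m)%N -> P n <= P m.
Proof.
move=> P1 P2 n m /subnK <-; elim: (m - n)%N => [|i IH]; first by rewrite add0n.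
apply: (le_trans IH); rewrite addSn; have := P2 (i + n)%N; have := P1 (i + n)%N; lra.
Qed.

Lemma comb (C : R) (P r : nat -> R) : 0 < C -> (forall n, 1 < P n) ->
  (forall n, 2 * P n <= P n.+1) -> (forall n, 0 <= r n) -> (forall n, r n <= 1) ->
  (forall n, r n <= C * P n) -> (forall n, 1 <= C * P n -> r n.+1 <= C / P n) ->
  (forall n, P n <= C -> r n = 0) -> forall k, \sum_(n < k) r n <= 4.
Proof.
move=> C0 P1 P2 r0 r1 rx ry rz k.
have P0 : forall n, 0 < P n by move=> n; have := P1 n; lra.
have y0 : forall n, 0 <= C / P n by move=> n; rewrite divr_ge0 // ?ltW.
have y2 : forall n, 2 * (C / P n.+1) <= C / P n.
  move=> n; rewrite mulrA [2 * C]mulrC -mulrA; apply: ler_wpM2l; first exact: ltW.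
  have hi : (P n.+1)^-1 <= (2 * P n)^-1.
    by rewrite lef_pV2 ?posrE ?P0 ?mulr_gt0 //.
  rewrite invfM in hi; lra.
have [hA|hB] := ltP (C * P 0%N) 1.
- have C1 : C < 1 by have := P1 0%N; nra.
  pose X n := if C * P n < 1 then C * P n else 0.
  pose Y := shiftf 0 (fun j => if C / P j < 2^-1 then C / P j else 0).
  pose Z n := ((firstb (fun m => 1 <= C * P m) n)%:R : R).
  have pw : forall n, r n <= X n + Y n + Z n.
    move=> n.
    have X0 : 0 <= X n by rewrite /X; case: ifP => _ //; rewrite mulr_ge0 ?ltW.
    have Y0 : 0 <= Y n.
      by rewrite /Y /shiftf; case: (n : nat) => [|j] //; case: ifP.
    have Z0 : 0 <= Z n by rewrite /Z ler0n.
    move: X0 Y0 Z0; rewrite /X; case: ifP => hn X0 Y0 Z0.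
      by have := rx n; lra.
    move: hn X0 Y0 Z0; case: n => [|j] hn X0 Y0 Z0; first by rewrite hA in hn.
    have bj1 : (1 <= C * P j.+1) = true by rewrite leNgt hn.
    rewrite /Z /firstb /= bj1 /=.
    rewrite /Y /shiftf /= in Y0 *.
    case: (ltP (C * P j) 1) => hj /=.
      by have := r1 j.+1; lra.
    have hy := ry j hj.
    destruct j as [|i]; first by move: hA; rewrite ltNge hj.
    have hP : 2 < P i.+1 by have := P2 i; have := P1 i; lra.
    have hlt : C / P i.+1 < 2^-1.
      rewrite ltr_pdivrMr ?P0 //; lra.
    rewrite hlt; lra.
  apply: (le_trans (y := \sum_(i < k) (X i + Y i + Z i))).
    by apply: ler_sum => i _; exact: pw.
  rewrite !big_split /=.
  have SX : \sum_(i < k) X i <= 2 * 1.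
    apply: (up_sum (fun n => C * P n) 1); first lra.
      by move=> n; rewrite mulr_ge0 ?ltW.
    move=> n; rewrite mulrA [2 * C]mulrC -mulrA; apply: ler_wpM2l; first exact: ltW.
    exact: P2.
  have SY : \sum_(i < k) Y i <= 2 * 2^-1.
    destruct k as [|k]; first by rewrite big_ord0; lra.
    rewrite /Y shift_sum; apply: (down_sum (fun n => C / P n)) => //; lra.
  have SZ : \sum_(i < k) Z i <= 1.
    apply: (tele_sum (fun m => 1 <= C * P m)) => n hn; apply: (le_trans hn).
    apply: ler_wpM2l; first exact: ltW.
    by have := P2 n; have := P1 n; lra.
  lra.
- pose F := shiftf 1 (fun j => (if C / P j < 1 then C / P j else 0) +
       ((firstb (fun m => C < P m) j.+1)%:R : R)).
  have pw : forall n, r n <= F n.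
    case=> [|j]; first exact: r1.
    have hj : 1 <= C * P j.
      apply: (le_trans hB); apply: ler_wpM2l; first exact: ltW.
      exact: (P_mono P P1 P2 0%N j (leq0n j)).
    have hy := ry j hj.
    rewrite /F /shiftf /firstb /=.
    case: ifP => h1.
      by rewrite ler_wpDr // ler0n.
    rewrite add0r.
    case: (ltP C (P j.+1)) => h2 /=; last by rewrite (rz _ h2).
    have : ~~ (C < P j).
      rewrite -leNgt; move: h1 => /negbT; rewrite -leNgt.
      by rewrite ler_pdivlMr ?P0 // mul1r.
    by move=> ->; exact: r1.
  apply: (le_trans (y := \sum_(i < k) F i)).
    by apply: ler_sum => i _; exact: pw.
  case: k => [|k]; first by rewrite big_ord0; lra.
  rewrite /F shift_sumz big_split /=.
  have SY : \sum_(i < k) (if C / P i < 1 then C / P i else 0) <= 2 * 1.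
    by apply: (down_sum (fun n => C / P n)) => //; lra.
  have SZ : \sum_(i < k) ((firstb (fun m => C < P m) i.+1)%:R : R) <= 1.
    have := tele_sum (fun m => C < P m) _ k.+1.
    rewrite big_ord_recl /=.
    have T : forall n, C < P n -> C < P n.+1.
      by move=> n hn; apply: (lt_le_trans hn); have := P2 n; have := P1 n; lra.
    move=> /(_ T).
    have : 0 <= ((firstb (fun m => C < P m) 0)%:R : R) by rewrite ler0n.
    suff -> : \sum_(i < k) ((firstb (fun m => C < P m) (lift ord0 i))%:R : R) =
              \sum_(i < k) ((firstb (fun m => C < P m) i.+1)%:R : R) by lra.
    by apply: eq_bigr => i _; rewrite lift0.
  lra.
Qed.

End RealLemmas.

Set Implicit Arguments. Unset Strict Implicit.

Section Pointwise.
Variable R : realType.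
Definition tr (v M : R) := if M^-1 < `|v| < M then v else 0.

Lemma tr_abs v M : `|tr v M| <= `|v|.
Proof. by rewrite /tr; case: ifP; rewrite ?normr0. Qed.

Lemma tr0 M : tr 0 M = 0.
Proof. by rewrite /tr; case: ifP. Qed.

Lemma tr_nz v M : tr v M != 0 -> M^-1 < `|v| < M.
Proof. by rewrite /tr; case: ifP => // _; rewrite eqxx. Qed.

Lemma trd_abs v a b : `|tr v b - tr v a| <= `|v|.
Proof.
rewrite /tr; case: ifP => _; case: ifP => _;
  by rewrite ?subrr ?normr0 ?subr0 ?sub0r ?normrN.
Qed.

Lemma trd_nz v a b : 0 < a -> a < b -> tr v b - tr v a != 0 -> b^-1 < `|v| < b.
Proof.
move=> a0 ab; rewrite /tr; case: ifP => // hb; case: ifP => ha;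
  last by rewrite subrr eqxx.
move: ha => /andP[ha1 ha2] _.
have : b^-1 < a^-1 by rewrite ltf_pV2 ?posrE //; lra.
move: hb => /negbT; rewrite negb_and -!leNgt => /orP[] h1 h2; lra.
Qed.

Lemma trd_big v a b c : 0 < a -> a < b -> 1 <= c * a ->
  c < `|tr v b - tr v a| -> a <= `|v|.
Proof.
move=> a0 ab ca hc; rewrite leNgt; apply/negP => va.
have hv : c < `|v| := lt_le_trans hc (trd_abs v a b).
have ai : a^-1 <= c by rewrite -div1r ler_pdivrMr.
have bi : b^-1 < a^-1 by rewrite ltf_pV2 ?posrE //; lra.
move: hc; rewrite /tr.
have -> : (a^-1 < `|v| < a) = true by apply/andP; split; lra.
have -> : (b^-1 < `|v| < b) = true by apply/andP; split; lra.
rewrite subrr normr0 => hc.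
have : 0 <= `|v| by [].
have : 0 < c by apply: lt_le_trans ai; rewrite invr_gt0.
lra.
Qed.

Lemma sum_disj (u v : nat -> R) (c : R) k : 0 <= c ->
  (forall n, u n = 0 -> v n = 0) ->
  (forall n m, (n < k)%N -> (m < k)%N -> n <> m -> u n = 0 \/ u m = 0) ->
  (forall n, (n < k)%N -> `|v n| <= c) -> `|\sum_(n < k) v n| <= c.
Proof.
move=> c0 uv; elim: k => [|k IH] hd hv; first by rewrite big_ord0 normr0.
rewrite big_ord_recr /=.
have [uk|uk] := eqVneq (u k) 0.
  rewrite (uv _ uk) addr0; apply: IH.
    by move=> n m nk mk; apply: hd; apply: ltnW.
  by move=> n nk; apply: hv; apply: ltnW.
rewrite big1 ?add0r; first by apply: hv.
move=> i _; apply: uv.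
have ik : (i : nat) <> k by move=> /eqP; rewrite ltn_eqF.
have := hd i k (ltnW (ltn_ord i)) (ltnSn k) ik.
by case => // /eqP; rewrite (negbTE uk).
Qed.

End Pointwise.

Section Meas.
Context (d : measure_display) (T : measurableType d) (R : realType)
  (mu : {measure set T -> \bar R}) (p : R).
Hypothesis p1 : 1 < p.

Lemma p0 : 0 < p. Proof. by have := p1; lra. Qed.

Lemma powRpinv (x : R) : 0 <= x -> (x `^ p) `^ p^-1 = x.
Proof. by move=> x0; rewrite -powRrM mulfV ?powRr1 // gt_eqF // p0. Qed.

Lemma powRinvp (x : R) : 0 <= x -> (x `^ p^-1) `^ p = x.
Proof. by move=> x0; rewrite -powRrM mulVf ?powRr1 // gt_eqF // p0. Qed.

Lemma wbound (g : T -> R) (t : R) : (weakLnorm mu p g <= 1)%E -> 0 < t ->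
  ((t `^ p)%:E * mu [set x | (t < `|g x|)%R] <= 1)%E.
Proof.
move=> Hg t0.
set A := [set x | (t < `|g x|)%R].
have H : (t%:E * poweR (mu A) p^-1 <= 1)%E.
  apply: le_trans Hg; rewrite /weakLnorm; apply: ereal_sup_ubound; exists t => //.
have a0 : (0 <= mu A)%E by exact: measure_ge0.
move: H a0; case: (mu A) => [a| |] //=.
- rewrite !lee_fin => H a0.
  have Hn : (t * a `^ p^-1) `^ p <= 1 `^ p.
    apply: (ge0_ler_powR (ltW p0)) => //;
      by rewrite nnegrE ?mulr_ge0 ?powR_ge0 ?(ltW t0) ?ler01.
  by rewrite powR1 powRM ?powR_ge0 ?(ltW t0) // powRinvp in Hn.
- have -> : (p^-1 == 0) = false by rewrite invr_eq0 gt_eqF ?p0.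
  rewrite mulry gtr0_sg // mul1e.
  by rewrite leNgt ltry.
Qed.

Lemma closed_bound (a t : R) : 0 <= a -> 0 < t ->
  (forall s, 0 < s -> s < t -> s `^ p * a <= 1) -> t `^ p * a <= 1.
Proof.
move=> a0 t0 H; rewrite leNgt; apply/negP => Hc.
have apos : 0 < a.
  rewrite lt_neqAle a0 andbT; apply/negP => /eqP ha; move: Hc.
  by rewrite -ha mulr0 ltr10.
set s0 := a^-1 `^ p^-1.
have s00 : 0 <= s0 by exact: powR_ge0.
have s0p : s0 `^ p = a^-1 by rewrite powRinvp // invr_ge0.
have s0t : s0 < t.
  rewrite ltNge; apply/negP => ts.
  have : t `^ p <= s0 `^ p.
    by apply: (ge0_ler_powR (ltW p0)); rewrite ?nnegrE ?(ltW t0).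
  rewrite s0p => h.
  have : t `^ p * a <= a^-1 * a by rewrite ler_wpM2r.
  by rewrite mulVf ?gt_eqF // leNgt Hc.
set s := (s0 + t) / 2.
have ss0 : s0 < s by rewrite /s; lra.
have st : s < t by rewrite /s; lra.
have sp : a^-1 < s `^ p.
  by rewrite -s0p; apply: (gt0_ltr_powR p0); rewrite ?nnegrE //; lra.
have := H s ltac:(rewrite /s; lra) st.
have : a^-1 * a < s `^ p * a by rewrite ltr_pM2r.
by rewrite mulVf ?gt_eqF //; lra.
Qed.

Lemma mset_lt (g : T -> R) (t : R) : measurable_fun setT g ->
  measurable [set x | (t < `|g x|)%R].
Proof.
move=> mg.
have mb : measurable_fun setT (fun x => t < `|g x|).
  apply: measurable_realfun.measurable_fun_ltr; first exact: measurable_cst.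
  exact: (measurableT_comp (@measurable_realfun.normr_measurable R setT) mg).
have := mb measurableT [set true] I; rewrite setTI.
by [].
Qed.

Lemma set_bound (g : T -> R) (A : set T) (t : R) : measurable_fun setT g ->
  measurable A -> (weakLnorm mu p g <= 1)%E -> 0 < t ->
  A `<=` [set x | (t < `|g x|)%R] -> ((t `^ p)%:E * mu A <= 1)%E.
Proof.
move=> mg mA Hg t0 sub.
apply: (le_trans _ (wbound Hg t0)).
apply: lee_wpmul2l; first by rewrite lee_fin powR_ge0.
by apply: le_measure => //; rewrite inE //; exact: mset_lt.
Qed.

Lemma fin_of_bound (x : \bar R) (t : R) : 0 < t -> (0 <= x)%E ->
  (t%:E * x <= 1)%E -> x = (fine x)%:E.
Proof.
case: x => [a| |] //= t0 _.
by rewrite mulry gtr0_sg // mul1e leNgt ltry.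
Qed.

End Meas.

Unset Implicit Arguments. Set Strict Implicit.

Lemma min0 (R : realType) (a b : R) : Num.min `|a| `|b| = 0 -> a = 0 \/ b = 0.
Proof.
case: leP => _ /eqP; rewrite normr_eq0 => /eqP ->; by [left|right].
Qed.

Theorem lemma12 (d : measure_display) (T : measurableType d) (R : realType)
  (mu : {measure set T -> \bar R}) (p : R) (f : nat -> T -> R) (M : nat -> R) :
  1 < p ->
  (forall n, measurable_fun setT (f n)) ->
  (forall n, (weakLnorm mu p (f n) <= 1)%E) ->
  (forall n m, n <> m ->
     {ae mu, forall x, Num.min `|f n x| `|f m x| = 0}) ->
  (forall n, 1 < M n /\ M n <= 2 `^ (- p^-1) * M n.+1) ->
  forall k : nat, (weakLnorm mu p (fun x => (\sum_(n < k) gseq f M n x)%R) <= 4%:E)%E.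
Proof.
move=> p1 mf Hf Hdisj HM k.
have hp0 : 0 < p by lra.
have M1 : forall n, 1 < M n by move=> n; case: (HM n).
have Mp : forall n, 0 < M n by move=> n; have := M1 n; lra.
have two1 : 2 `^ (- p^-1) < 1.
  rewrite powRN invf_lt1 ?powR_gt0 //.
  have ip : 0 < p^-1 by rewrite invr_gt0.
  have := @gt0_ltr_powR R p^-1 ip 1 2.
  rewrite powR1 /=; apply; rewrite ?nnegrE //; lra.
have Mlt : forall n, M n < M n.+1.
  move=> n; case: (HM n) => _ h; have := Mp n.+1; have := powR_ge0 2 (- p^-1); nra.
set P := fun n => M n `^ p.
have P1 : forall n, 1 < P n.
  move=> n; rewrite /P; have := @gt0_ltr_powR R p hp0 1 (M n).
  rewrite powR1 /=; apply; rewrite ?nnegrE ?M1 //; exact: ltW.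
have P2 : forall n, 2 * P n <= P n.+1.
  move=> n; case: (HM n) => _ h.
  have h2 : M n `^ p <= (2 `^ (- p^-1) * M n.+1) `^ p.
    apply: (ge0_ler_powR (ltW hp0)); rewrite ?nnegrE ?(ltW (Mp _)) //.
    by rewrite mulr_ge0 ?powR_ge0 ?(ltW (Mp _)).
  rewrite powRM ?powR_ge0 ?(ltW (Mp _)) // -powRrM mulNr mulVf ?gt_eqF //
    powR_inv1 // in h2.
  rewrite /P; lra.
rewrite /weakLnorm; apply: ge_ereal_sup => _ [c /= c0 <-].
set C := c `^ p.
have C0 : 0 < C by exact: powR_gt0.
set S := fun n => [set x | (c < `|gseq f M n x|)%R].
have mtr : forall (g : T -> R) (a : R), measurable_fun setT g ->
    measurable_fun setT (fun x => trunc g a x).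
  move=> g a mg; rewrite /trunc; apply: measurable_fun_ifT.
  - apply: measurable_and; apply: measurable_realfun.measurable_fun_ltr;
      try exact: measurable_cst;
      exact: (measurableT_comp (@measurable_realfun.normr_measurable R setT) mg).
  - exact: mg.
  - exact: measurable_cst.
have mg : forall n, measurable_fun setT (gseq f M n).
  case=> [|j] /=; first exact: mtr.
  by apply: measurable_realfun.measurable_funB; apply: mtr.
have mS : forall n, measurable (S n) by move=> n; exact: mset_lt.
have gle : forall n x, `|gseq f M n x| <= `|f n x|.
  case=> [|j] x /=; first by have := tr_abs (f 0%N x) (M 0%N); rewrite /tr /trunc.
  by have := trd_abs (f j.+1 x) (M j) (M j.+1); rewrite /tr /trunc.
have subf : forall n t, 0 < t -> S n `<=` [set x | (t < `|f n x|)%R] ->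
    ((t `^ p)%:E * mu (S n) <= 1)%E.
  by move=> n t t0 sub; apply: (set_bound p1 (mf n) (mS n) (Hf n) t0 sub).
have Sc : forall n, S n `<=` [set x | (c < `|f n x|)%R].
  by move=> n x /= hx; exact: lt_le_trans hx (gle n x).
have Ea : forall n, mu (S n) = (fine (mu (S n)))%:E.
  move=> n; apply: (fin_of_bound (t := c `^ p)) => //.
  exact: (subf n c c0 (Sc n)).
set a := fun n => fine (mu (S n)).
have a0 : forall n, 0 <= a n by move=> n; rewrite -lee_fin -Ea.
have rb : forall n t, 0 < t -> S n `<=` [set x | (t < `|f n x|)%R] ->
    t `^ p * a n <= 1.
  by move=> n t t0 sub; have := subf n t t0 sub; rewrite Ea -EFinM lee_fin.
have gnz : forall n x, c < `|gseq f M n x| ->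
    (M n)^-1 < `|f n x| < M n.
  move=> n x hx.
  have nz : gseq f M n x != 0.
    by apply/eqP => e; move: hx; rewrite e normr0 ltNge (ltW c0).
  case: n hx nz => [|j] hx nz /=; first exact: tr_nz.
  exact: (trd_nz (Mp j) (Mlt j)).
set r := fun n => C * a n.
have r0 : forall n, 0 <= r n by move=> n; rewrite mulr_ge0 ?(ltW C0).
have r1 : forall n, r n <= 1 by move=> n; exact: (rb n c c0 (Sc n)).
have rx : forall n, r n <= C * P n.
  move=> n; apply: ler_wpM2l; first exact: ltW.
  have Mi : 0 < (M n)^-1 by rewrite invr_gt0.
  have h := rb n _ Mi (fun x hx => proj1 (andP (gnz n x hx))).
  have inv : (M n)^-1 `^ p * P n = 1.
    by rewrite /P -powRM ?invr_ge0 ?(ltW (Mp n)) // mulVf ?gt_eqF // powR1.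
  have := P1 n; have := a0 n; nra.
have ry : forall n, 1 <= C * P n -> r n.+1 <= C / P n.
  move=> n h.
  have cM : 1 <= c * M n.
    rewrite leNgt; apply/negP => hl.
    have : (c * M n) `^ p < 1 `^ p.
      apply: (gt0_ltr_powR hp0) => //;
        by rewrite nnegrE ?ler01 // mulr_ge0 ?(ltW c0) ?(ltW (Mp n)).
    by rewrite powR1 powRM ?(ltW c0) ?(ltW (Mp n)) // -/C ltNge h.
  have hb : P n * a n.+1 <= 1.
    apply: (closed_bound p1 (a0 _) (Mp n)) => s s0 sM.
    apply: rb => // x hx.
    exact: lt_le_trans sM (trd_big (Mp n) (Mlt n) cM hx).
  rewrite /r ler_pdivlMr; last by have := P1 n; lra.
  by have := P1 n; nra.
have rz : forall n, P n <= C -> r n = 0.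
  move=> n h.
  have cM : M n <= c.
    rewrite leNgt; apply/negP => hl.
    have : c `^ p < M n `^ p.
      by apply: (gt0_ltr_powR hp0) => //; rewrite nnegrE ltW.
    by rewrite -/C ltNge h.
  rewrite /r /a.
  have -> : S n = set0.
    apply/seteqP; split => x //= hx.
    have := gnz n x hx => /andP[_ h2].
    have hx2 : c < `|gseq f M n x| := hx.
    have := gle n x; lra.
  by rewrite measure0 /= mulr0.
have Hsum := @comb R C P r C0 P1 P2 r0 r1 rx ry rz k.
rewrite /r -mulr_sumr in Hsum.
have Hae : {ae mu, forall x, forall i : 'I_k * 'I_k,
    (i.1 : nat) <> i.2 -> Num.min `|f i.1 x| `|f i.2 x| = 0}.
  apply: filter_forall => i.
  have [e|ne] := eqVneq (i.1 : nat) i.2.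
    by apply: filterE => x h; exfalso; exact: h e.
  by apply: filterS (Hdisj _ _ (elimN eqP ne)) => x h _.
case: Hae => N [mN N0 sN].
set h := fun x => \sum_(n < k) gseq f M n x.
have mh : measurable_fun setT h.
  by apply: measurable_sum => i; exact: mg.
have mH : measurable [set x | (c < `|h x|)%R] by exact: mset_lt.
have incl : [set x | (c < `|h x|)%R] `<=` N `|` \big[setU/set0]_(n < k) S n.
  move=> x hx.
  case: (pselect (N x)) => [Nx|nN]; first by left.
  right.
  have Px : forall i : 'I_k * 'I_k,
      (i.1 : nat) <> i.2 -> Num.min `|f i.1 x| `|f i.2 x| = 0.
    case: (pselect (forall i : 'I_k * 'I_k,
      (i.1 : nat) <> i.2 -> Num.min `|f i.1 x| `|f i.2 x| = 0)) => // nP.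
    by exfalso; apply: nN; exact: sN nP.
  rewrite -bigcup_mkord.
  case: (pselect (exists2 n, (n < k)%N & S n x)) => [[n nk Sn]|nS].
    by exists n.
  exfalso.
  have uv : forall n, f n x = 0 -> gseq f M n x = 0.
    by case=> [|j] /= e; rewrite /trunc e ?if_same ?subrr.
  have hd : forall n m, (n < k)%N -> (m < k)%N -> n <> m ->
      f n x = 0 \/ f m x = 0.
    move=> n m nk mk nm.
    exact: min0 (Px (Ordinal nk, Ordinal mk) nm).
  have hv : forall n, (n < k)%N -> `|gseq f M n x| <= c.
    move=> n nk; rewrite leNgt; apply/negP => hn; apply: nS; by exists n.
  have := sum_disj (ltW c0) uv hd hv.
  by rewrite leNgt hx.
have bound : (mu [set x | (c < `|h x|)%R] <= (\sum_(n < k) a n)%:E)%E.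
  apply: (le_trans (y := mu (N `|` \big[setU/set0]_(n < k) S n))).
    apply: le_measure => //; rewrite inE //.
    by apply: measurableU => //; apply: bigsetU_measurable.
  have mB : measurable (\big[setU/set0]_(n < k) S n).
    by apply: bigsetU_measurable.
  have U2 : (mu (N `|` \big[setU/set0]_(n < k) S n) <=
      mu N + mu (\big[setU/set0]_(n < k) S n))%E by apply: measureU2.
  rewrite N0 add0e in U2.
  apply: le_trans U2 _.
  have Bo : (mu (\big[setU/set0]_(n < k) S n) <= \sum_(n < k) mu (S n))%E.
    by apply: Boole_inequality.
  apply: le_trans Bo _.
  by rewrite -sumEFin; apply: lee_sum => i _; rewrite Ea.
have s0 : 0 <= \sum_(n < k) a n by apply: sumr_ge0 => i _; exact: a0.
apply: (le_trans (y := (c%:E * ((\sum_(n < k) a n)%:E `^ p^-1))%E)).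
  apply: lee_wpmul2l; first by rewrite lee_fin ltW.
  apply: gt0_ler_poweR.
  - by rewrite invr_ge0 ltW.
  - by rewrite in_itv /= leey andbT; exact: measure_ge0.
  - by rewrite in_itv /= leey andbT lee_fin.
  - exact: bound.
rewrite poweR_EFin -EFinM lee_fin.
have cc : c = C `^ p^-1 by rewrite /C (@powRpinv _ p p1 c (ltW c0)).
rewrite [X in X * _]cc.
rewrite -powRM ?powR_ge0 //.
apply: (le_trans (y := 4 `^ p^-1)).
  have ip : 0 <= p^-1 by rewrite invr_ge0 ltW.
  apply: (ge0_ler_powR ip); rewrite ?nnegrE ?mulr_ge0 ?(ltW C0) //.
apply: ler1_powR; first lra.
by rewrite invf_le1 //; lra.
Qed.
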